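(* Let $p\equiv1\pmod8$ and $q\equiv3\pmod8$ be primes with $\left(\frac pq\right)=1$, $\mathbb{K}=\mathbb{Q}(\sqrt2,\sqrt p,\sqrt q)$, and write $\varepsilon_{2pq}=x+y\sqrt{2pq}$, $\varepsilon_{pq}=v+w\sqrt{pq}$ with integers $x,y,v,w$. For $\eta\in\mathbb{K}$ and $\sigma\in\mathrm{Gal}(\mathbb{K}/\mathbb{Q})$ put $\eta^{1+\sigma}=\eta\sigma(\eta)$. Then $\varepsilon_{2pq}$ and $\varepsilon_{pq}$ are squares in $\mathbb{K}$ and, for either square root $\eta$ of $\varepsilon_{2pq}$ in $\mathbb{K}$, the values $(\eta^{1+\tau_2},\eta^{1+\tau_1\tau_2},\eta^{1+\tau_1\tau_3},\eta^{1+\tau_2\tau_3},\eta^{1+\tau_1})$ are: $(-1,-\varepsilon_{2pq},-\varepsilon_{2pq},\varepsilon_{2pq},1)$ if $x-1$ is a square in $\mathbb{N}$; $(1,\varepsilon_{2pq},-\varepsilon_{2pq},-\varepsilon_{2pq},1)$ if $p(x-1)$ is a square in $\mathbb{N}$; $(-1,-\varepsilon_{2pq},\varepsilon_{2pq},-\varepsilon_{2pq},1)$ if $2p(x+1)$ is a square in $\mathbb{N}$. For either square root $\eta$ of $\varepsilon_{pq}$ in $\mathbb{K}$, the same tuple equals: $(-1,1,1,\varepsilon_{pq},-\varepsilon_{pq})$ if $v-1$ is a square in $\mathbb{N}$; $(1,-1,1,-\varepsilon_{pq},-\varepsilon_{pq})$ if $p(v-1)$ is a square in $\mathbb{N}$;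 $(-1,-1,1,-\varepsilon_{pq},\varepsilon_{pq})$ if $2p(v+1)$ is a square in $\mathbb{N}$.
   Context: For squarefree $d>1$, $\varepsilon_d>1$ is the fundamental unit of $\mathbb{Q}(\sqrt d)$. Under the hypotheses, exactly one of $x-1$, $p(x-1)$, $2p(x+1)$ is a square in $\mathbb{N}$ and exactly one of $v-1$, $p(v-1)$, $2p(v+1)$ is. $\tau_1,\tau_2,\tau_3\in\mathrm{Gal}(\mathbb{K}/\mathbb{Q})$: $\tau_1$ sends $\sqrt2\mapsto-\sqrt2$ and fixes $\sqrt p,\sqrt q$; $\tau_2$ sends $\sqrt p\mapsto-\sqrt p$ and fixes $\sqrt2,\sqrt q$; $\tau_3$ sends $\sqrt q\mapsto-\sqrt q$ and fixes $\sqrt2,\sqrt p$. *)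

(* Defs.v *)
From HB Require Import structures.
From mathcomp Require Import all_boot all_order all_algebra all_field.
Set Implicit Arguments. Unset Strict Implicit. Unset Printing Implicit Defensive.
Import Order.TTheory GRing.Theory Num.Theory.
Local Open Scope ring_scope.

(* All number fields are realised inside algC (algebraic complex numbers);
   sqrtC n is the positive real square root of n >= 0. *)

Definition legendre_is_one (a q : nat) : Prop :=
  ~~ (q %| a)%N /\ exists t : nat, (t ^ 2 = a %[mod q])%N.

(* Q-span of the products sqrt2^a sqrtp^b sqrtq^c, i.e. the field
   K = Q(sqrt 2, sqrt p, sqrt q) as a subset of algC. *)
Definition inK (p q : nat) (z : algC) : Prop :=
  exists c : bool -> bool -> bool -> rat,
    z = \sum_(a : bool) \sum_(b : bool) \sum_(e : bool)
          ratr (c a b e) * sqrtC 2 ^+ a * sqrtC p%:R ^+ b * sqrtC q%:R ^+ e.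

(* a + b sqrt d is a unit of Z[sqrt d] (the ring of integers of Q(sqrt d)
   when d = 2,3 mod 4), i.e. has norm +-1. *)
Definition unitZsqrt (d : nat) (a b : int) : Prop :=
  a ^+ 2 - d%:Z * b ^+ 2 = 1 \/ a ^+ 2 - d%:Z * b ^+ 2 = -1.

Definition zsqrt (d : nat) (a b : int) : algC := a%:~R + b%:~R * sqrtC d%:R.

Definition fund_unit (d : nat) (x y : int) : Prop :=
  [/\ unitZsqrt d x y, 1 < zsqrt d x y &
      forall a b : int, unitZsqrt d a b -> 1 < zsqrt d a b ->
        zsqrt d x y <= zsqrt d a b].

Definition is_nat_square (n : int) : Prop := exists m : nat, n = (m ^ 2)%N%:Z.

Definition norm_tuple (t1 t2 t3 : algC -> algC) (eta : algC) :=
  (eta * t2 eta, eta * t1 (t2 eta), eta * t1 (t3 eta), eta * t2 (t3 eta),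
   eta * t1 eta).

(* Main.v *)
Require Import Defs.
From HB Require Import structures.
From mathcomp Require Import all_boot all_order all_algebra all_field.
From mathcomp Require Import zify ring lra.
Import Order.TTheory GRing.Theory Num.Theory.

Lemma sqfact z : forall a b k, 0 < a -> coprime a b -> a * b = k * z ^ 2 ->
  exists d u, d %| k /\ a = d * u ^ 2.
Proof.
elim/ltn_ind: z => z IH a b k a0 cop E.
case: (ltnP z 2) => hz.
  case: z IH E hz => [|[|//]] IH E _.
    have b0 : b = 0 by move: E; rewrite expnS mul0n muln0; move/eqP; rewrite muln_eq0 eqn0Ngt a0 /= => /eqP.
    move: cop; rewrite b0 /coprime gcdn0 => /eqP ->.
    by exists 1, 1; rewrite dvd1n.
  exists a, 1; split; last by rewrite exp1n muln1.
  by rewrite -(muln1 k) -(exp1n 2) -E dvdn_mulr.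
have pr := pdiv_prime hz.
set r := pdiv z in pr.
have rz : r %| z by exact: pdiv_dvd.
have r1 := prime_gt1 pr.
case/dvdnP: rz => z' ez.
have z'lt : z' < z by rewrite ez; nia.
have r2ab : r ^ 2 %| a * b by rewrite E ez expnMn mulnA dvdn_mull.
have Hk : forall a' b', a * b = r ^ 2 * (a' * b') -> a' * b' = k * z' ^ 2.
  move=> a' b' H; apply/eqP; rewrite -(eqn_pmul2l (_ : 0 < r ^ 2)); last by rewrite expn_gt0 (ltnW r1).
  by rewrite -H E ez expnMn; apply/eqP; nia.
case ra: (r %| a).
  have crb : coprime (r ^ 2) b.
    rewrite coprime_pexpl // prime_coprime //; apply/negP => rb.
    move: cop; rewrite /coprime => /eqP g.
    have : r %| gcdn a b by rewrite dvdn_gcd ra.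
    by rewrite g dvdn1 => /eqP r1'; rewrite r1' in r1.
  have : r ^ 2 %| a by rewrite -(Gauss_dvdl _ crb).
  case/dvdnP=> a' ea.
  have a'0 : 0 < a' by move: a0; rewrite ea muln_gt0 => /andP[].
  have cop' : coprime a' b by apply: (coprime_dvdl _ cop); rewrite ea dvdn_mulr.
  have Hab : a' * b = k * z' ^ 2 by apply: Hk; rewrite ea; nia.
  have [d [u [du eu]]] := IH z' z'lt a' b k a'0 cop' Hab.
  by exists d, (r * u); split => //; rewrite ea eu; nia.
have cra : coprime (r ^ 2) a by rewrite coprime_pexpl // prime_coprime // ra.
have : r ^ 2 %| b by rewrite -(Gauss_dvdr _ cra).
case/dvdnP=> b' eb.
have cop' : coprime a b' by apply: (coprime_dvdr _ cop); rewrite eb dvdn_mulr.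
have Hab : a * b' = k * z' ^ 2 by apply: Hk; rewrite eb; nia.
exact: (IH z' z'lt a b' k a0 cop' Hab).
Qed.

Lemma divstep r d m : prime r -> d %| r * m -> exists (e : bool) d', d = r ^ e * d' /\ d' %| m.
Proof.
move=> pr dm.
case rd: (r %| d).
  case/dvdnP: rd => d' ed; exists true, d'; split; first by rewrite ed expn1 mulnC.
  by move: dm; rewrite ed mulnC dvdn_pmul2l // prime_gt0.
exists false, d; split; first by rewrite expn0 mul1n.
have : coprime d r by rewrite coprime_sym prime_coprime // rd.
by move=> c; rewrite -(Gauss_dvdr _ c).
Qed.

Lemma div3 d p q : prime p -> prime q -> d %| 2 * p * q ->
  exists (a b c : bool), d = 2 ^ a * p ^ b * q ^ c.
Proof.
move=> pp pq; rewrite -mulnA => h.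
have [a [d1 [e1 h1]]] := @divstep 2 _ _ (isT : prime 2) h.
have [b [d2 [e2 h2]]] := @divstep _ _ _ pp h1.
rewrite -(muln1 q) in h2.
have [c [d3 [e3 h3]]] := @divstep _ _ _ pq h2.
move: h3; rewrite dvdn1 => /eqP e4.
by exists a, b, c; rewrite e1 e2 e3 e4 muln1 mulnA.
Qed.

Lemma div2 d p q : prime p -> prime q -> d %| p * q ->
  exists (b c : bool), d = p ^ b * q ^ c.
Proof.
move=> pp pq h.
have [b [d2 [e2 h2]]] := @divstep _ _ _ pp h.
rewrite -(muln1 q) in h2.
have [c [d3 [e3 h3]]] := @divstep _ _ _ pq h2.
move: h3; rewrite dvdn1 => /eqP e4.
by exists b, c; rewrite e2 e3 e4 muln1.
Qed.
Local Open Scope ring_scope.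

Definition Bm (p q : nat) (a b c : bool) : algC :=
  sqrtC 2 ^+ a * sqrtC p%:R ^+ b * sqrtC q%:R ^+ c.

Lemma inK2 p q a1 b1 c1 a2 b2 c2 (r1 r2 : rat) :
  inK p q (ratr r1 * Bm p q a1 b1 c1 + ratr r2 * Bm p q a2 b2 c2).
Proof.
exists (fun a b e => (if (a, b, e) == (a1, b1, c1) then r1 else 0) +
                     (if (a, b, e) == (a2, b2, c2) then r2 else 0)).
rewrite /Bm.
by case: a1; case: b1; case: c1; case: a2; case: b2; case: c2;
  rewrite !big_bool /= ?rmorphD ?rmorph0; ring.
Qed.

Lemma sqrt_nat_mul (m n : nat) : sqrtC (m * n)%:R = sqrtC m%:R * sqrtC n%:R :> algC.
Proof. by rewrite natrM sqrtCM // nnegrE ler0n. Qed.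

Lemma sqrt_exp (m : nat) (a : bool) : sqrtC (m ^ a)%:R = sqrtC m%:R ^+ a :> algC.
Proof. by case: a; rewrite /= ?expn1 ?expr1 ?expn0 ?expr0 ?sqrtC1. Qed.

Lemma sqrt_B p q (a b c : bool) : sqrtC (2 ^ a * p ^ b * q ^ c)%:R = Bm p q a b c.
Proof. by rewrite !sqrt_nat_mul !sqrt_exp. Qed.

Definition sgnb (b : bool) (X : algC) := if b then - X else X.

Definition Ff (e d : algC) (fa fb : bool) :=
  if fa then (if fb then - e else - d) else (if fb then d else e).

Lemma comp_val (t : algC -> algC) A B e d fa fb :
  t (A + B) = sgnb fa A + sgnb fb B -> (A + B) ^+ 2 = e -> A ^+ 2 - B ^+ 2 = d ->
  (A + B) * t (A + B) = Ff e d fa fb.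
Proof.
move=> -> he hd; case: fa; case: fb; rewrite /sgnb /Ff -?he -?hd; ring.
Qed.

Lemma sgnbM (t : {rmorphism algC -> algC}) b X : t (sgnb b X) = sgnb b (t X).
Proof. by case: b => //=; rewrite rmorphN. Qed.

Lemma sgnbK b c X : sgnb b (sgnb c X) = sgnb (b (+) c) X.
Proof. by case: b; case: c; rewrite /= ?opprK. Qed.

Lemma tuple_gen (t1 t2 t3 : {rmorphism algC -> algC}) A B e d
  (a1 a2 a3 b1 b2 b3 : bool) :
  t1 A = sgnb a1 A -> t2 A = sgnb a2 A -> t3 A = sgnb a3 A ->
  t1 B = sgnb b1 B -> t2 B = sgnb b2 B -> t3 B = sgnb b3 B ->
  (A + B) ^+ 2 = e -> A ^+ 2 - B ^+ 2 = d ->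
  forall eta, eta ^+ 2 = e ->
  norm_tuple t1 t2 t3 eta = (Ff e d a2 b2, Ff e d (a1 (+) a2) (b1 (+) b2),
     Ff e d (a1 (+) a3) (b1 (+) b3), Ff e d (a2 (+) a3) (b2 (+) b3), Ff e d a1 b1).
Proof.
move=> hA1 hA2 hA3 hB1 hB2 hB3 he hd eta.
rewrite -[e in _ = e]he => /eqP; rewrite eqf_sqr => hor.
have H : forall (s : algC -> algC) fa fb, s (A + B) = sgnb fa A + sgnb fb B ->
    (forall z, s (- z) = - s z) -> eta * s eta = Ff e d fa fb.
  move=> s fa fb hs hN; case/orP: hor => /eqP ->; last rewrite hN mulrNN;
    exact: comp_val.
have C1 : forall (u v : {rmorphism algC -> algC}) a1' a2' b1' b2',
    u A = sgnb a1' A -> v A = sgnb a2' A -> u B = sgnb b1' B -> v B = sgnb b2' B ->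
    eta * u (v eta) = Ff e d (a1' (+) a2') (b1' (+) b2').
  move=> u v a1' a2' b1' b2' ua va ub vb.
  have := H (fun z => u (v z)) (a1' (+) a2') (b1' (+) b2'); apply.
    by rewrite /= !rmorphD va vb !sgnbM ua ub !sgnbK ![_ (+) a2']addbC ![_ (+) b2']addbC.
  by move=> z /=; rewrite !rmorphN.
rewrite /norm_tuple (C1 _ _ _ _ _ _ hA1 hA2 hB1 hB2) (C1 _ _ _ _ _ _ hA1 hA3 hB1 hB3)
  (C1 _ _ _ _ _ _ hA2 hA3 hB2 hB3).
rewrite (H t2 a2 b2) ?(H t1 a1 b1) //; try (move=> z; exact: rmorphN);
  by rewrite rmorphD ?hA1 ?hB1 ?hA2 ?hB2.
Qed.
Lemma mod4 (v : int) : exists s r, v = 4 * s + r /\ (r = 0 \/ r = 1 \/ r = 2 \/ r = 3).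
Proof.
exists (v %/ 4)%Z, (v %% 4)%Z; split; first by rewrite {1}(divz_eq v 4) mulrC.
have h1 : 0 <= (v %% 4)%Z by rewrite modz_ge0.
have h2 : (v %% 4)%Z < 4 by rewrite ltz_pmod.
lia.
Qed.

Lemma no_neg1_a (M v w : int) : v ^+ 2 - (8 * M + 3) * w ^+ 2 <> -1.
Proof.
have [s [r [-> hr]]] := mod4 v; have [t [r' [-> hr']]] := mod4 w.
rewrite !expr2.
by case: hr => [->|[->|[->|->]]]; case: hr' => [->|[->|[->|->]]]; lia.
Qed.

Lemma no_neg1_b (M v w : int) : v ^+ 2 - (16 * M + 6) * w ^+ 2 <> -1.
Proof.
have [s [r [-> hr]]] := mod4 v; have [t [r' [-> hr']]] := mod4 w.
rewrite !expr2.
by case: hr => [->|[->|[->|->]]]; case: hr' => [->|[->|[->|->]]]; lia.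
Qed.
Lemma norm_C (d : nat) (x y : int) : x ^+ 2 - d%:Z * y ^+ 2 = 1 ->
  (x%:~R : algC) ^+ 2 - d%:R * (y%:~R) ^+ 2 = 1.
Proof.
move=> h; have hh : (x ^+ 2 - d%:Z * y ^+ 2)%:~R = (1 : int)%:~R :> algC by rewrite h.
by move: hh; rewrite rmorphB !rmorphXn rmorphM rmorphXn.
Qed.

Lemma gt1 (d : nat) (x y : int) : x ^+ 2 - d%:Z * y ^+ 2 = 1 -> 1 < zsqrt d x y -> 1 < x.
Proof.
move=> h; have hC := @norm_C _ _ _ h; rewrite /zsqrt => hE.
set s := sqrtC d%:R in hE.
set X := (x%:~R : algC) in hC hE *; set Y := (y%:~R : algC) in hC hE *.
have hs : s ^+ 2 = d%:R by rewrite sqrtCK.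
have EF : (X + Y * s) * (X - Y * s) = 1 by rewrite -hC -hs; ring.
have E0 : X + Y * s != 0 by apply: lt0r_neq0; apply: lt_trans hE.
have F0 : 0 < X - Y * s.
  have -> : X - Y * s = (X + Y * s)^-1 by apply: (mulfI E0); rewrite EF mulfV.
  by rewrite invr_gt0; apply: lt_trans hE.
have X0 : 0 < X.
  have -> : X = ((X + Y * s) + (X - Y * s)) / 2 by field.
  by rewrite divr_gt0 // addr_gt0 //; apply: lt_trans hE.
have x0 : 0 < x by rewrite -(ltr0z algC).
rewrite lt_neqAle; apply/andP; split; last by lia.
apply/eqP => x1; move: hE; rewrite /X -x1 /=.
have : (Y * s) ^+ 2 = 0.
  move: hC; rewrite /X -x1 exprMn hs expr1n => /eqP; rewrite subr_eq addrC -subr_eq subrr eq_sym mulrC => /eqP; done.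
by move/eqP; rewrite expf_eq0 /= => /eqP ->; rewrite addr0 ltxx.
Qed.
Local Close Scope ring_scope.

Lemma oddE n : odd n -> exists a, n = 2 * a + 1.
Proof. by move=> o; exists n./2; move: (odd_double_half n); rewrite o -muln2; lia. Qed.

Lemma parity n : exists a, n = 2 * a \/ n = 2 * a + 1.
Proof. by exists n./2; move: (odd_double_half n); case: (odd n); rewrite -muln2; lia. Qed.

Lemma nat_e1 (p q X Y : nat) : odd p -> odd q -> X ^ 2 = 1 + 2 * p * q * Y ^ 2 -> 1 < X ->
  exists n z, [/\ X = 2 * n + 1, Y = 2 * z, 0 < n & n * (n + 1) = 2 * p * q * z ^ 2].
Proof.
move=> /oddE[a ->] /oddE[b ->] h X1.
have [n [hn|hn]] := parity X; subst X; first by lia.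
have [z [hz|hz]] := parity Y; subst Y.
  by exists n, z; split => //; lia.
lia.
Qed.

Lemma nat_e2 (p q V W : nat) : odd p -> odd q -> V ^ 2 = 1 + p * q * W ^ 2 -> 1 < V ->
  (exists n z, [/\ V = 2 * n + 1, W = 2 * z, 0 < n & n * (n + 1) = p * q * z ^ 2]) \/
  (exists k, V = 2 * k + 2 /\ (2 * k + 1) * (2 * k + 3) = p * q * W ^ 2).
Proof.
move=> /oddE[a ->] /oddE[b ->] h X1.
have [n [hn|hn]] := parity V; subst V.
  right; exists n.-1; split; first lia.
  have -> : 2 * n.-1 + 1 = 2 * n - 1 by lia.
  have -> : 2 * n.-1 + 3 = 2 * n + 1 by lia.
  nia.
left; have [z [hz|hz]] := parity W; subst W.
  by exists n, z; split => //; lia.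
lia.
Qed.
Local Open Scope ring_scope.

Lemma sqrt_nat_sq (m : nat) : sqrtC (m ^ 2)%:R = m%:R :> algC.
Proof. by rewrite natrX sqrCK // ler0n. Qed.

Lemma sq_root_gen (N1 N2 u1 u2 d1 d2 K z : nat) (s : algC) :
  N1 = (d1 * u1 ^ 2)%N -> N2 = (d2 * u2 ^ 2)%N -> (N1 * N2 = K * z ^ 2)%N -> s ^+ 2 = 1 ->
  (u1%:R * sqrtC d1%:R + s * u2%:R * sqrtC d2%:R) ^+ 2 =
    (N1 + N2)%:R + 2 * s * z%:R * sqrtC K%:R.
Proof.
move=> e1 e2 e3 hs.
have key : u1%:R * u2%:R * sqrtC d1%:R * sqrtC d2%:R = z%:R * sqrtC K%:R :> algC.
  have E : ((u1 ^ 2 * u2 ^ 2) * (d1 * d2) = K * z ^ 2)%N by rewrite -e3 e1 e2; lia.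
  transitivity (sqrtC ((u1 ^ 2 * u2 ^ 2) * (d1 * d2))%N%:R : algC).
    by rewrite (sqrt_nat_mul (u1 ^ 2 * u2 ^ 2)) (sqrt_nat_mul (u1 ^ 2)) !sqrt_nat_sq sqrt_nat_mul; ring.
  by rewrite E (sqrt_nat_mul K) sqrt_nat_sq; ring.
set S1 := sqrtC (d1%:R : algC); set S2 := sqrtC (d2%:R : algC).
have -> : (u1%:R * S1 + s * u2%:R * S2) ^+ 2 = (u1%:R) ^+ 2 * S1 ^+ 2 + s ^+ 2 * (u2%:R) ^+ 2 * S2 ^+ 2
   + 2 * s * (u1%:R * u2%:R * S1 * S2) by ring.
by rewrite key hs /S1 /S2 !sqrtCK e1 e2 !natrD !natrM ?natrX; ring.
Qed.

Local Close Scope ring_scope.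

Lemma cop_odd k : coprime (2 * k + 1) (2 * k + 3).
Proof.
have -> : (2 * k + 3 = (2 * k + 1) + 2)%N by lia.
by rewrite /coprime gcdnDl -/(coprime _ 2) coprimen2 oddD oddM.
Qed.

Local Open Scope ring_scope.
Lemma exist_gen p q (x y : int) (N1 N2 u1 u2 d1 d2 K z : nat) (a1 b1 c1 a2 b2 c2 : bool) :
  d1 = (2 ^ a1 * p ^ b1 * q ^ c1)%N -> d2 = (2 ^ a2 * p ^ b2 * q ^ c2)%N ->
  N1 = (d1 * u1 ^ 2)%N -> N2 = (d2 * u2 ^ 2)%N -> (N1 * N2 = K * z ^ 2)%N ->
  x = (N1 + N2)%N%:Z -> (y = (2 * z)%N%:Z \/ y = - (2 * z)%N%:Z) ->
  exists eta, inK p q eta /\ eta ^+ 2 = x%:~R + y%:~R * sqrtC K%:R.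
Proof.
move=> ed1 ed2 e1 e2 e3 ex ey.
have H := fun s => @sq_root_gen N1 N2 u1 u2 d1 d2 K z s e1 e2 e3.
case: ey => ->.
  exists (ratr (u1%:R) * Bm p q a1 b1 c1 + ratr (u2%:R) * Bm p q a2 b2 c2); split.
    exact: inK2.
  rewrite !ratr_nat -!sqrt_B -ed1 -ed2 -[_ * sqrtC d2%:R]mul1r mulrA H ?expr1n //.
  by rewrite ex -!pmulrn natrM; ring.
exists (ratr (u1%:R) * Bm p q a1 b1 c1 + ratr (- u2%:R) * Bm p q a2 b2 c2); split.
  exact: inK2.
rewrite rmorphN !rmorph_nat -!sqrt_B -ed1 -ed2.
have -> : u1%:R * sqrtC d1%:R + - (u2%:R : algC) * sqrtC d2%:R =
  u1%:R * sqrtC d1%:R + (-1) * u2%:R * sqrtC d2%:R :> algC by ring.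
rewrite H ?sqrrN ?expr1n //.
by rewrite ex mulrNz -!pmulrn natrM; ring.
Qed.

Lemma Bm_true p q b c : Bm p q true b c = sqrtC 2 * Bm p q false b c.
Proof. by rewrite /Bm /= expr1 expr0 mul1r !mulrA. Qed.

Lemma exist_gen2 p q (x y : int) (N1 N2 u1 u2 d1 d2 K z : nat) (b1 c1 b2 c2 : bool) :
  d1 = (2 ^ false * p ^ b1 * q ^ c1)%N -> d2 = (2 ^ false * p ^ b2 * q ^ c2)%N ->
  N1 = (d1 * u1 ^ 2)%N -> N2 = (d2 * u2 ^ 2)%N -> (N1 * N2 = K * z ^ 2)%N ->
  2 * x = (N1 + N2)%N%:Z -> (y = z%:Z \/ y = - z%:Z) ->
  exists eta, inK p q eta /\ eta ^+ 2 = x%:~R + y%:~R * sqrtC K%:R.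
Proof.
move=> ed1 ed2 e1 e2 e3 ex ey.
have H := fun s => @sq_root_gen N1 N2 u1 u2 d1 d2 K z s e1 e2 e3.
have hx : x%:~R = (N1 + N2)%:R / 2 :> algC.
  have : (2 * x)%:~R = (N1 + N2)%N%:Z%:~R :> algC by rewrite ex.
  by rewrite rmorphM /= -pmulrn => <-; field.
have h2 : sqrtC 2 ^+ 2 = 2 :> algC by rewrite sqrtCK.
have hs : forall s : algC, s ^+ 2 = 1 -> s ^+ 2 = 1 by [].
case: ey => ->.
  exists (ratr (u1%:R / 2) * Bm p q true b1 c1 + ratr (u2%:R / 2) * Bm p q true b2 c2); split.
    exact: inK2.
  rewrite !Bm_true !fmorph_div !rmorph_nat -!sqrt_B -ed1 -ed2.
  have -> : u1%:R / 2 * (sqrtC 2 * sqrtC d1%:R) + u2%:R / 2 * (sqrtC 2 * sqrtC d2%:R) =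
     (u1%:R * sqrtC d1%:R + 1 * u2%:R * sqrtC d2%:R) * sqrtC 2 / 2 :> algC by ring.
  rewrite expr_div_n exprMn H ?expr1n // h2 hx -pmulrn; field; done.
exists (ratr (u1%:R / 2) * Bm p q true b1 c1 + ratr (- (u2%:R) / 2) * Bm p q true b2 c2); split.
  exact: inK2.
rewrite !Bm_true !fmorph_div rmorphN !rmorph_nat -!sqrt_B -ed1 -ed2.
have -> : u1%:R / 2 * (sqrtC 2 * sqrtC d1%:R) + - (u2%:R : algC) / 2 * (sqrtC 2 * sqrtC d2%:R) =
   (u1%:R * sqrtC d1%:R + (-1) * u2%:R * sqrtC d2%:R) * sqrtC 2 / 2 :> algC by ring.
rewrite expr_div_n exprMn H ?sqrrN ?expr1n // h2 hx mulrNz -pmulrn; field; done.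
Qed.
Lemma lin (k a b c d : algC) : c = d -> a - b = k * (c - d) -> a = b.
Proof. by move=> -> h; apply/eqP; rewrite -subr_eq0 h subrr mulr0. Qed.

Ltac fin := field; try (repeat (apply/andP; split); rewrite ?pnatr_eq0 -?lt0n; first [assumption | done]).

Definition EE p q (x y : int) : algC := x%:~R + y%:~R * (sqrtC 2 * sqrtC p%:R * sqrtC q%:R).

Definition EE2 p q (v w : int) : algC := v%:~R + w%:~R * (sqrtC p%:R * sqrtC q%:R).

Lemma case1 (t1 t2 t3 : {rmorphism algC -> algC}) (p q m : nat) (x y : int) :
  t1 (sqrtC 2) = - sqrtC 2 -> t1 (sqrtC p%:R) = sqrtC p%:R -> t1 (sqrtC q%:R) = sqrtC q%:R ->
  t2 (sqrtC 2) = sqrtC 2 -> t2 (sqrtC p%:R) = - sqrtC p%:R -> t2 (sqrtC q%:R) = sqrtC q%:R ->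
  t3 (sqrtC 2) = sqrtC 2 -> t3 (sqrtC p%:R) = sqrtC p%:R -> t3 (sqrtC q%:R) = - sqrtC q%:R ->
  (0 < p)%N -> (0 < q)%N -> (0 < m)%N ->
  (x%:~R : algC) ^+ 2 - 2 * p%:R * q%:R * y%:~R ^+ 2 = 1 ->
  (x%:~R : algC) - 1 = m%:R ^+ 2 ->
  forall eta, eta ^+ 2 = EE p q x y ->
  norm_tuple t1 t2 t3 eta = (-1, - EE p q x y, - EE p q x y, EE p q x y, 1).
Proof.
move=> h1s2 h1sp h1sq h2s2 h2sp h2sq h3s2 h3sp h3sq p0 q0 m0 hN hX eta heta.
rewrite /EE in heta *.
set s2 := sqrtC 2 in h1s2 h2s2 h3s2 heta *.
set sp := sqrtC p%:R in h1sp h2sp h3sp heta *.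
set sq := sqrtC q%:R in h1sq h2sq h3sq heta *.
set P := (p%:R : algC) in hN *; set Q := (q%:R : algC) in hN *.
set M := (m%:R : algC) in hX *.
set X := (x%:~R : algC) in hN hX heta *; set Y := (y%:~R : algC) in hN heta *.
have hs2 : s2 ^+ 2 = 2 by rewrite sqrtCK.
have hsp : sp ^+ 2 = P by rewrite sqrtCK.
have hsq : sq ^+ 2 = Q by rewrite sqrtCK.
have P0 : P != 0 by rewrite pnatr_eq0 -lt0n.
have Q0 : Q != 0 by rewrite pnatr_eq0 -lt0n.
have M0 : M != 0 by rewrite pnatr_eq0 -lt0n.
have hY2 : Y ^+ 2 = (X ^+ 2 - 1) / (2 * P * Q).
  by apply: (@lin (- 1 / (2 * P * Q)) _ _ _ _ hN); fin.
have hX' : X = M ^+ 2 + 1 by rewrite -hX; ring.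
pose A := M * s2 / 2; pose B := Y * sp * sq / M.
have eA : A ^+ 2 = M ^+ 2 * s2 ^+ 2 / 4 by rewrite /A; fin.
have eB : B ^+ 2 = Y ^+ 2 * sp ^+ 2 * sq ^+ 2 / M ^+ 2 by rewrite /B; fin.
have eAB : 2 * A * B = Y * (s2 * sp * sq) by rewrite /A /B; fin.
rewrite hs2 in eA; rewrite hsp hsq in eB.
have sq2 : (A + B) ^+ 2 = A ^+ 2 + B ^+ 2 + 2 * A * B by ring.
rewrite (@tuple_gen t1 t2 t3 A B (X + Y * (s2 * sp * sq)) (-1) true false false false true true) //.
- by rewrite /Ff /= opprK.
all: try (rewrite /sgnb /A /B !(rmorphM, fmorphV, rmorph_nat, rmorph_int) ?h1s2 ?h1sp ?h1sq ?h2s2 ?h2sp ?h2sq ?h3s2 ?h3sp ?h3sq; ring).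
- by rewrite sq2 eA eB eAB hY2 hX'; fin.
- by rewrite eA eB hY2 hX'; fin.
Qed.
Lemma case2 (t1 t2 t3 : {rmorphism algC -> algC}) (p q m : nat) (x y : int) :
  t1 (sqrtC 2) = - sqrtC 2 -> t1 (sqrtC p%:R) = sqrtC p%:R -> t1 (sqrtC q%:R) = sqrtC q%:R ->
  t2 (sqrtC 2) = sqrtC 2 -> t2 (sqrtC p%:R) = - sqrtC p%:R -> t2 (sqrtC q%:R) = sqrtC q%:R ->
  t3 (sqrtC 2) = sqrtC 2 -> t3 (sqrtC p%:R) = sqrtC p%:R -> t3 (sqrtC q%:R) = - sqrtC q%:R ->
  (0 < p)%N -> (0 < q)%N -> (0 < m)%N ->
  (x%:~R : algC) ^+ 2 - 2 * p%:R * q%:R * y%:~R ^+ 2 = 1 ->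
  (p%:R : algC) * (x%:~R - 1) = m%:R ^+ 2 ->
  forall eta, eta ^+ 2 = EE p q x y ->
  norm_tuple t1 t2 t3 eta = (1, EE p q x y, - EE p q x y, - EE p q x y, 1).
Proof.
move=> h1s2 h1sp h1sq h2s2 h2sp h2sq h3s2 h3sp h3sq p0 q0 m0 hN hX eta heta.
rewrite /EE in heta *.
set s2 := sqrtC 2 in h1s2 h2s2 h3s2 heta *.
set sp := sqrtC p%:R in h1sp h2sp h3sp heta *.
set sq := sqrtC q%:R in h1sq h2sq h3sq heta *.
set P := (p%:R : algC) in hN hX *; set Q := (q%:R : algC) in hN *.
set M := (m%:R : algC) in hX *.
set X := (x%:~R : algC) in hN hX heta *; set Y := (y%:~R : algC) in hN heta *.
have hs2 : s2 ^+ 2 = 2 by rewrite sqrtCK.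
have hsp : sp ^+ 2 = P by rewrite sqrtCK.
have hsq : sq ^+ 2 = Q by rewrite sqrtCK.
have hY2 : Y ^+ 2 = (X ^+ 2 - 1) / (2 * P * Q).
  by apply: (@lin (- 1 / (2 * P * Q)) _ _ _ _ hN); fin.
have hX' : X = M ^+ 2 / P + 1 by apply: (@lin (1 / P) _ _ _ _ hX); fin.
pose A := M * s2 * sp / (2 * P); pose B := P * Y * sq / M.
have eA : A ^+ 2 = M ^+ 2 * s2 ^+ 2 * sp ^+ 2 / (4 * P ^+ 2) by rewrite /A; fin.
have eB : B ^+ 2 = P ^+ 2 * Y ^+ 2 * sq ^+ 2 / M ^+ 2 by rewrite /B; fin.
have eAB : 2 * A * B = Y * (s2 * sp * sq) by rewrite /A /B; fin.
rewrite ?hs2 ?hsp ?hsq in eA eB eAB.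
have sq2 : (A + B) ^+ 2 = A ^+ 2 + B ^+ 2 + 2 * A * B by ring.
rewrite (@tuple_gen t1 t2 t3 A B (X + Y * (s2 * sp * sq)) (-1) true true false false false true) //.
all: try by rewrite /Ff /= ?opprK.
all: try (rewrite /sgnb /A /B !(rmorphM, fmorphV, rmorph_nat, rmorph_int) ?h1s2 ?h1sp ?h1sq ?h2s2 ?h2sp ?h2sq ?h3s2 ?h3sp ?h3sq; ring).
- by rewrite sq2 eA eB eAB hY2 hX'; fin.
- by rewrite eA eB hY2 hX'; fin.
Qed.

Lemma case3 (t1 t2 t3 : {rmorphism algC -> algC}) (p q m : nat) (x y : int) :
  t1 (sqrtC 2) = - sqrtC 2 -> t1 (sqrtC p%:R) = sqrtC p%:R -> t1 (sqrtC q%:R) = sqrtC q%:R ->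
  t2 (sqrtC 2) = sqrtC 2 -> t2 (sqrtC p%:R) = - sqrtC p%:R -> t2 (sqrtC q%:R) = sqrtC q%:R ->
  t3 (sqrtC 2) = sqrtC 2 -> t3 (sqrtC p%:R) = sqrtC p%:R -> t3 (sqrtC q%:R) = - sqrtC q%:R ->
  (0 < p)%N -> (0 < q)%N -> (0 < m)%N ->
  (x%:~R : algC) ^+ 2 - 2 * p%:R * q%:R * y%:~R ^+ 2 = 1 ->
  2 * (p%:R : algC) * (x%:~R + 1) = m%:R ^+ 2 ->
  forall eta, eta ^+ 2 = EE p q x y ->
  norm_tuple t1 t2 t3 eta = (-1, - EE p q x y, EE p q x y, - EE p q x y, 1).
Proof.
move=> h1s2 h1sp h1sq h2s2 h2sp h2sq h3s2 h3sp h3sq p0 q0 m0 hN hX eta heta.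
rewrite /EE in heta *.
set s2 := sqrtC 2 in h1s2 h2s2 h3s2 heta *.
set sp := sqrtC p%:R in h1sp h2sp h3sp heta *.
set sq := sqrtC q%:R in h1sq h2sq h3sq heta *.
set P := (p%:R : algC) in hN hX *; set Q := (q%:R : algC) in hN *.
set M := (m%:R : algC) in hX *.
set X := (x%:~R : algC) in hN hX heta *; set Y := (y%:~R : algC) in hN heta *.
have hs2 : s2 ^+ 2 = 2 by rewrite sqrtCK.
have hsp : sp ^+ 2 = P by rewrite sqrtCK.
have hsq : sq ^+ 2 = Q by rewrite sqrtCK.
have hY2 : Y ^+ 2 = (X ^+ 2 - 1) / (2 * P * Q).
  by apply: (@lin (- 1 / (2 * P * Q)) _ _ _ _ hN); fin.
have hX' : X = M ^+ 2 / (2 * P) - 1 by apply: (@lin (1 / (2 * P)) _ _ _ _ hX); fin.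
pose A := M * sp / (2 * P); pose B := P * Y * s2 * sq / M.
have eA : A ^+ 2 = M ^+ 2 * sp ^+ 2 / (4 * P ^+ 2) by rewrite /A; fin.
have eB : B ^+ 2 = P ^+ 2 * Y ^+ 2 * s2 ^+ 2 * sq ^+ 2 / M ^+ 2 by rewrite /B; fin.
have eAB : 2 * A * B = Y * (s2 * sp * sq) by rewrite /A /B; fin.
rewrite ?hs2 ?hsp ?hsq in eA eB eAB.
have sq2 : (A + B) ^+ 2 = A ^+ 2 + B ^+ 2 + 2 * A * B by ring.
rewrite (@tuple_gen t1 t2 t3 A B (X + Y * (s2 * sp * sq)) (1) false true false true false true) //.
all: try by rewrite /Ff /= ?opprK.
all: try (rewrite /sgnb /A /B !(rmorphM, fmorphV, rmorph_nat, rmorph_int) ?h1s2 ?h1sp ?h1sq ?h2s2 ?h2sp ?h2sq ?h3s2 ?h3sp ?h3sq; ring).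
- by rewrite sq2 eA eB eAB hY2 hX'; fin.
- by rewrite eA eB hY2 hX'; fin.
Qed.

Lemma case4 (t1 t2 t3 : {rmorphism algC -> algC}) (p q m : nat) (x y : int) :
  t1 (sqrtC 2) = - sqrtC 2 -> t1 (sqrtC p%:R) = sqrtC p%:R -> t1 (sqrtC q%:R) = sqrtC q%:R ->
  t2 (sqrtC 2) = sqrtC 2 -> t2 (sqrtC p%:R) = - sqrtC p%:R -> t2 (sqrtC q%:R) = sqrtC q%:R ->
  t3 (sqrtC 2) = sqrtC 2 -> t3 (sqrtC p%:R) = sqrtC p%:R -> t3 (sqrtC q%:R) = - sqrtC q%:R ->
  (0 < p)%N -> (0 < q)%N -> (0 < m)%N ->
  (x%:~R : algC) ^+ 2 - p%:R * q%:R * y%:~R ^+ 2 = 1 ->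
  (x%:~R : algC) - 1 = m%:R ^+ 2 ->
  forall eta, eta ^+ 2 = EE2 p q x y ->
  norm_tuple t1 t2 t3 eta = (-1, 1, 1, EE2 p q x y, - EE2 p q x y).
Proof.
move=> h1s2 h1sp h1sq h2s2 h2sp h2sq h3s2 h3sp h3sq p0 q0 m0 hN hX eta heta.
rewrite /EE2 in heta *.
set s2 := sqrtC 2 in h1s2 h2s2 h3s2 heta *.
set sp := sqrtC p%:R in h1sp h2sp h3sp heta *.
set sq := sqrtC q%:R in h1sq h2sq h3sq heta *.
set P := (p%:R : algC) in hN hX *; set Q := (q%:R : algC) in hN *.
set M := (m%:R : algC) in hX *.
set X := (x%:~R : algC) in hN hX heta *; set Y := (y%:~R : algC) in hN heta *.
have hs2 : s2 ^+ 2 = 2 by rewrite sqrtCK.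
have hsp : sp ^+ 2 = P by rewrite sqrtCK.
have hsq : sq ^+ 2 = Q by rewrite sqrtCK.
have hY2 : Y ^+ 2 = (X ^+ 2 - 1) / (P * Q).
  by apply: (@lin (- 1 / (P * Q)) _ _ _ _ hN); fin.
have hX' : X = M ^+ 2 + 1 by rewrite -hX; ring.
pose A := Y * sp * sq * s2 / (2 * M); pose B := M * s2 / 2.
have eA : A ^+ 2 = Y ^+ 2 * sp ^+ 2 * sq ^+ 2 * s2 ^+ 2 / (4 * M ^+ 2) by rewrite /A; fin.
have eB : B ^+ 2 = M ^+ 2 * s2 ^+ 2 / 4 by rewrite /B; fin.
have eAB : 2 * A * B = Y * (sp * sq) * s2 ^+ 2 / 2 by rewrite /A /B; fin.
rewrite ?hs2 ?hsp ?hsq in eA eB eAB.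
have sq2 : (A + B) ^+ 2 = A ^+ 2 + B ^+ 2 + 2 * A * B by ring.
rewrite (@tuple_gen t1 t2 t3 A B (X + Y * (sp * sq)) (1) true true true true false false) //.
all: try by rewrite /Ff /= ?opprK.
all: try (rewrite /sgnb /A /B !(rmorphM, fmorphV, rmorph_nat, rmorph_int) ?h1s2 ?h1sp ?h1sq ?h2s2 ?h2sp ?h2sq ?h3s2 ?h3sp ?h3sq; ring).
- by rewrite sq2 eA eB eAB hY2 hX'; fin.
- by rewrite eA eB hY2 hX'; fin.
Qed.

Lemma case5 (t1 t2 t3 : {rmorphism algC -> algC}) (p q m : nat) (x y : int) :
  t1 (sqrtC 2) = - sqrtC 2 -> t1 (sqrtC p%:R) = sqrtC p%:R -> t1 (sqrtC q%:R) = sqrtC q%:R ->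
  t2 (sqrtC 2) = sqrtC 2 -> t2 (sqrtC p%:R) = - sqrtC p%:R -> t2 (sqrtC q%:R) = sqrtC q%:R ->
  t3 (sqrtC 2) = sqrtC 2 -> t3 (sqrtC p%:R) = sqrtC p%:R -> t3 (sqrtC q%:R) = - sqrtC q%:R ->
  (0 < p)%N -> (0 < q)%N -> (0 < m)%N ->
  (x%:~R : algC) ^+ 2 - p%:R * q%:R * y%:~R ^+ 2 = 1 ->
  (p%:R : algC) * (x%:~R - 1) = m%:R ^+ 2 ->
  forall eta, eta ^+ 2 = EE2 p q x y ->
  norm_tuple t1 t2 t3 eta = (1, -1, 1, - EE2 p q x y, - EE2 p q x y).
Proof.
move=> h1s2 h1sp h1sq h2s2 h2sp h2sq h3s2 h3sp h3sq p0 q0 m0 hN hX eta heta.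
rewrite /EE2 in heta *.
set s2 := sqrtC 2 in h1s2 h2s2 h3s2 heta *.
set sp := sqrtC p%:R in h1sp h2sp h3sp heta *.
set sq := sqrtC q%:R in h1sq h2sq h3sq heta *.
set P := (p%:R : algC) in hN hX *; set Q := (q%:R : algC) in hN *.
set M := (m%:R : algC) in hX *.
set X := (x%:~R : algC) in hN hX heta *; set Y := (y%:~R : algC) in hN heta *.
have hs2 : s2 ^+ 2 = 2 by rewrite sqrtCK.
have hsp : sp ^+ 2 = P by rewrite sqrtCK.
have hsq : sq ^+ 2 = Q by rewrite sqrtCK.
have hY2 : Y ^+ 2 = (X ^+ 2 - 1) / (P * Q).
  by apply: (@lin (- 1 / (P * Q)) _ _ _ _ hN); fin.
have hX' : X = M ^+ 2 / P + 1 by apply: (@lin (1 / P) _ _ _ _ hX); fin.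
pose A := P * Y * sq * s2 / (2 * M); pose B := M * s2 * sp / (2 * P).
have eA : A ^+ 2 = P ^+ 2 * Y ^+ 2 * sq ^+ 2 * s2 ^+ 2 / (4 * M ^+ 2) by rewrite /A; fin.
have eB : B ^+ 2 = M ^+ 2 * s2 ^+ 2 * sp ^+ 2 / (4 * P ^+ 2) by rewrite /B; fin.
have eAB : 2 * A * B = Y * (sp * sq) * s2 ^+ 2 / 2 by rewrite /A /B; fin.
rewrite ?hs2 ?hsp ?hsq in eA eB eAB.
have sq2 : (A + B) ^+ 2 = A ^+ 2 + B ^+ 2 + 2 * A * B by ring.
rewrite (@tuple_gen t1 t2 t3 A B (X + Y * (sp * sq)) (1) true false true true true false) //.
all: try by rewrite /Ff /= ?opprK.
all: try (rewrite /sgnb /A /B !(rmorphM, fmorphV, rmorph_nat, rmorph_int) ?h1s2 ?h1sp ?h1sq ?h2s2 ?h2sp ?h2sq ?h3s2 ?h3sp ?h3sq; ring).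
- by rewrite sq2 eA eB eAB hY2 hX'; fin.
- by rewrite eA eB hY2 hX'; fin.
Qed.

Lemma case6 (t1 t2 t3 : {rmorphism algC -> algC}) (p q m : nat) (x y : int) :
  t1 (sqrtC 2) = - sqrtC 2 -> t1 (sqrtC p%:R) = sqrtC p%:R -> t1 (sqrtC q%:R) = sqrtC q%:R ->
  t2 (sqrtC 2) = sqrtC 2 -> t2 (sqrtC p%:R) = - sqrtC p%:R -> t2 (sqrtC q%:R) = sqrtC q%:R ->
  t3 (sqrtC 2) = sqrtC 2 -> t3 (sqrtC p%:R) = sqrtC p%:R -> t3 (sqrtC q%:R) = - sqrtC q%:R ->
  (0 < p)%N -> (0 < q)%N -> (0 < m)%N ->
  (x%:~R : algC) ^+ 2 - p%:R * q%:R * y%:~R ^+ 2 = 1 ->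
  2 * (p%:R : algC) * (x%:~R + 1) = m%:R ^+ 2 ->
  forall eta, eta ^+ 2 = EE2 p q x y ->
  norm_tuple t1 t2 t3 eta = (-1, -1, 1, - EE2 p q x y, EE2 p q x y).
Proof.
move=> h1s2 h1sp h1sq h2s2 h2sp h2sq h3s2 h3sp h3sq p0 q0 m0 hN hX eta heta.
rewrite /EE2 in heta *.
set s2 := sqrtC 2 in h1s2 h2s2 h3s2 heta *.
set sp := sqrtC p%:R in h1sp h2sp h3sp heta *.
set sq := sqrtC q%:R in h1sq h2sq h3sq heta *.
set P := (p%:R : algC) in hN hX *; set Q := (q%:R : algC) in hN *.
set M := (m%:R : algC) in hX *.
set X := (x%:~R : algC) in hN hX heta *; set Y := (y%:~R : algC) in hN heta *.
have hs2 : s2 ^+ 2 = 2 by rewrite sqrtCK.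
have hsp : sp ^+ 2 = P by rewrite sqrtCK.
have hsq : sq ^+ 2 = Q by rewrite sqrtCK.
have hY2 : Y ^+ 2 = (X ^+ 2 - 1) / (P * Q).
  by apply: (@lin (- 1 / (P * Q)) _ _ _ _ hN); fin.
have hX' : X = M ^+ 2 / (2 * P) - 1 by apply: (@lin (1 / (2 * P)) _ _ _ _ hX); fin.
pose A := M * sp / (2 * P); pose B := P * Y * sq / M.
have eA : A ^+ 2 = M ^+ 2 * sp ^+ 2 / (4 * P ^+ 2) by rewrite /A; fin.
have eB : B ^+ 2 = P ^+ 2 * Y ^+ 2 * sq ^+ 2 / M ^+ 2 by rewrite /B; fin.
have eAB : 2 * A * B = Y * (sp * sq) by rewrite /A /B; fin.
rewrite ?hs2 ?hsp ?hsq in eA eB eAB.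
have sq2 : (A + B) ^+ 2 = A ^+ 2 + B ^+ 2 + 2 * A * B by ring.
rewrite (@tuple_gen t1 t2 t3 A B (X + Y * (sp * sq)) (1) false true false false false true) //.
all: try by rewrite /Ff /= ?opprK.
all: try (rewrite /sgnb /A /B !(rmorphM, fmorphV, rmorph_nat, rmorph_int) ?h1s2 ?h1sp ?h1sq ?h2s2 ?h2sp ?h2sq ?h3s2 ?h3sp ?h3sq; ring).
- by rewrite sq2 eA eB eAB hY2 hX'; fin.
- by rewrite eA eB hY2 hX'; fin.
Qed.


Lemma sq_pos (z : int) m : 0 < z -> z = (m ^ 2)%N%:Z -> (0 < m)%N.
Proof. by move=> hz hm; rewrite lt0n; apply/eqP=> m0; move: hz; rewrite hm m0. Qed.

Lemma castsq (z : int) m : z = (m ^ 2)%N%:Z -> (z%:~R : algC) = m%:R ^+ 2.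
Proof. by move=> ->; rewrite -pmulrn natrX. Qed.

Lemma pos1 (x : int) (p : nat) : 1 < x -> (0 < p)%N ->
  [/\ 0 < x - 1, 0 < p%:Z * (x - 1) & 0 < 2 * p%:Z * (x + 1)].
Proof. move=> h1 h2; split; nia. Qed.

Lemma tupE1 (p q : nat) (x y : int) :
  x ^+ 2 - (2 * p * q)%N%:Z * y ^+ 2 = 1 ->
  zsqrt (2 * p * q) x y = EE p q x y /\
  (x%:~R : algC) ^+ 2 - 2 * p%:R * q%:R * y%:~R ^+ 2 = 1.
Proof.
move=> h; split; first by rewrite /zsqrt /EE !sqrt_nat_mul.
by have := @norm_C _ _ _ h; rewrite !natrM.
Qed.

Lemma tupE2 (p q : nat) (x y : int) :
  x ^+ 2 - (p * q)%N%:Z * y ^+ 2 = 1 ->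
  zsqrt (p * q) x y = EE2 p q x y /\
  (x%:~R : algC) ^+ 2 - p%:R * q%:R * y%:~R ^+ 2 = 1.
Proof.
move=> h; split; first by rewrite /zsqrt /EE2 !sqrt_nat_mul.
by have := @norm_C _ _ _ h; rewrite !natrM.
Qed.

Lemma castB1 (x : int) : ((x - 1)%:~R : algC) = x%:~R - 1.
Proof. by rewrite rmorphB. Qed.
Lemma castB2 (x : int) (p : nat) : ((p%:Z * (x - 1))%:~R : algC) = p%:R * (x%:~R - 1).
Proof. by rewrite rmorphM rmorphB. Qed.
Lemma castB3 (x : int) (p : nat) : ((2 * p%:Z * (x + 1))%:~R : algC) = 2 * p%:R * (x%:~R + 1).
Proof. by rewrite -mulrA rmorphM -mulrA; congr (_ * _); rewrite rmorphM rmorphD. Qed.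

Lemma int_abs (y : int) : exists Y : nat, y = Y%:Z \/ y = - Y%:Z.
Proof. by case: y => n; [exists n; left | exists n.+1; right; rewrite NegzE]. Qed.

Lemma nat_of_pos (x : int) : 0 <= x -> exists X : nat, x = X%:Z.
Proof. by case: x => n // _; exists n. Qed.

Lemma aux1 n : (2 * n + 1)%N%:Z = (n + (n + 1))%N%:Z.
Proof. congr Posz; lia. Qed.

Lemma aux2 k : 2 * (2 * k + 2)%N%:Z = ((2 * k + 1) + (2 * k + 3))%N%:Z.
Proof. lia. Qed.

Theorem mainTheorem5 (p q : nat) (x y v w : int)
  (t1 t2 t3 : {rmorphism algC -> algC}) :
  prime p -> prime q -> (p %% 8 = 1)%N -> (q %% 8 = 3)%N ->
  legendre_is_one p q ->
  fund_unit (2 * p * q) x y -> fund_unit (p * q) v w ->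
  t1 (sqrtC 2) = - sqrtC 2 -> t1 (sqrtC p%:R) = sqrtC p%:R ->
  t1 (sqrtC q%:R) = sqrtC q%:R ->
  t2 (sqrtC 2) = sqrtC 2 -> t2 (sqrtC p%:R) = - sqrtC p%:R ->
  t2 (sqrtC q%:R) = sqrtC q%:R ->
  t3 (sqrtC 2) = sqrtC 2 -> t3 (sqrtC p%:R) = sqrtC p%:R ->
  t3 (sqrtC q%:R) = - sqrtC q%:R ->
  let e1 := zsqrt (2 * p * q) x y in
  let e2 := zsqrt (p * q) v w in
  [/\ (exists eta, inK p q eta /\ eta ^+ 2 = e1),
      (exists eta, inK p q eta /\ eta ^+ 2 = e2),
      (forall eta, inK p q eta -> eta ^+ 2 = e1 ->
        [/\ is_nat_square (x - 1) ->
              norm_tuple t1 t2 t3 eta = (-1, - e1, - e1, e1, 1),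
            is_nat_square (p%:Z * (x - 1)) ->
              norm_tuple t1 t2 t3 eta = (1, e1, - e1, - e1, 1) &
            is_nat_square (2 * p%:Z * (x + 1)) ->
              norm_tuple t1 t2 t3 eta = (-1, - e1, e1, - e1, 1)]) &
      (forall eta, inK p q eta -> eta ^+ 2 = e2 ->
        [/\ is_nat_square (v - 1) ->
              norm_tuple t1 t2 t3 eta = (-1, 1, 1, e2, - e2),
            is_nat_square (p%:Z * (v - 1)) ->
              norm_tuple t1 t2 t3 eta = (1, -1, 1, - e2, - e2) &
            is_nat_square (2 * p%:Z * (v + 1)) ->
              norm_tuple t1 t2 t3 eta = (-1, -1, 1, - e2, e2)])].
Proof.
move=> pp pq p8 q8 _ [hU1 he1 _] [hU2 he2 _] h1s2 h1sp h1sq h2s2 h2sp h2sq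
  h3s2 h3sp h3sq e1 e2.
have [a ea] : exists a, p = (8 * a + 1)%N by exists (p %/ 8)%N; rewrite {1}(divn_eq p 8) p8; lia.
have [b eb] : exists b, q = (8 * b + 3)%N by exists (q %/ 8)%N; rewrite {1}(divn_eq q 8) q8; lia.
have op : odd p by rewrite ea oddD oddM.
have oq : odd q by rewrite eb oddD oddM.
have hN1 : x ^+ 2 - (2 * p * q)%N%:Z * y ^+ 2 = 1.
  case: hU1 => // h; exfalso; apply: (@no_neg1_b (8 * a * b + 3 * a + b)%N%:Z x y).
  by rewrite -h; congr (_ - _ * _); rewrite ea eb; lia.
have hN2 : v ^+ 2 - (p * q)%N%:Z * w ^+ 2 = 1.
  case: hU2 => // h; exfalso; apply: (@no_neg1_a (8 * a * b + 3 * a + b)%N%:Z v w).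
  by rewrite -h; congr (_ - _ * _); rewrite ea eb; lia.
have x1 := @gt1 _ _ _ hN1 he1; have v1 := @gt1 _ _ _ hN2 he2.
split.
- have [X ex] := @nat_of_pos _ (ltW (lt_trans ltr01 x1)).
  have [Y ey] := int_abs y.
  have hXY : (X ^ 2 = 1 + 2 * p * q * Y ^ 2)%N.
    by move: hN1; rewrite ex !expr2; case: ey => ->; lia.
  have X1 : (1 < X)%N by move: x1; rewrite ex; lia.
  have [n [z [eX eY n0 enn]]] := @nat_e1 _ _ _ _ op oq hXY X1.
  have cn : coprime n (n + 1) by rewrite addn1 coprimenS.
  have [d1 [u1 [dd1 eu1]]] := @sqfact _ _ _ _ n0 cn enn.
  have n1 : (0 < n + 1)%N by rewrite addn1.
  have cn' : coprime (n + 1) n by rewrite coprime_sym.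
  have enn' : ((n + 1) * n = 2 * p * q * z ^ 2)%N by rewrite mulnC.
  have [d2 [u2 [dd2 eu2]]] := @sqfact _ _ _ _ n1 cn' enn'.
  have [a1 [b1 [c1 ed1]]] := @div3 _ _ _ pp pq dd1.
  have [a2 [b2 [c2 ed2]]] := @div3 _ _ _ pp pq dd2.
  rewrite /e1 /zsqrt; apply: (@exist_gen _ _ _ _ _ _ _ _ _ _ _ _ _ _ _ _ _ _ ed1 ed2 eu1 eu2 enn); first by rewrite ex eX aux1.
  by case: ey => ->; [left | right]; rewrite eY.
- have [V ev] := @nat_of_pos _ (ltW (lt_trans ltr01 v1)).
  have [W ew] := int_abs w.
  have hVW : (V ^ 2 = 1 + p * q * W ^ 2)%N.
    by move: hN2; rewrite ev !expr2; case: ew => ->; lia.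
  have V1 : (1 < V)%N by move: v1; rewrite ev; lia.
  have := @nat_e2 _ _ _ _ op oq hVW V1; case.
    move=> [n [z [eV eW n0 enn]]].
    have cn : coprime n (n + 1) by rewrite addn1 coprimenS.
  have [d1 [u1 [dd1 eu1]]] := @sqfact _ _ _ _ n0 cn enn.
    have n1 : (0 < n + 1)%N by rewrite addn1.
    have cn' : coprime (n + 1) n by rewrite coprime_sym.
    have enn' : ((n + 1) * n = p * q * z ^ 2)%N by rewrite mulnC.
    have [d2 [u2 [dd2 eu2]]] := @sqfact _ _ _ _ n1 cn' enn'.
    have [b1 [c1 ed1]] := @div2 _ _ _ pp pq dd1.
    have [b2 [c2 ed2]] := @div2 _ _ _ pp pq dd2.
    have ed1' : d1 = (2 ^ false * p ^ b1 * q ^ c1)%N by rewrite ed1 /= mul1n.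
    have ed2' : d2 = (2 ^ false * p ^ b2 * q ^ c2)%N by rewrite ed2 /= mul1n.
    rewrite /e2 /zsqrt; apply: (@exist_gen _ _ _ _ _ _ _ _ _ _ _ _ false b1 c1 false b2 c2 ed1' ed2' eu1 eu2 enn); first by rewrite ev eV aux1.
    by case: ew => ->; [left | right]; rewrite eW.
  move=> [k [eV enn]].
  have k0 : (0 < 2 * k + 1)%N by rewrite addn1.
  have [d1 [u1 [dd1 eu1]]] := @sqfact _ _ _ _ k0 (cop_odd k) enn.
  have k1 : (0 < 2 * k + 3)%N by rewrite addn3.
  have ck : coprime (2 * k + 3) (2 * k + 1) by rewrite coprime_sym cop_odd.
  have enn' : ((2 * k + 3) * (2 * k + 1) = p * q * W ^ 2)%N by rewrite mulnC.
  have [d2 [u2 [dd2 eu2]]] := @sqfact _ _ _ _ k1 ck enn'.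
  have [b1 [c1 ed1]] := @div2 _ _ _ pp pq dd1.
  have [b2 [c2 ed2]] := @div2 _ _ _ pp pq dd2.
  have ed1' : d1 = (2 ^ false * p ^ b1 * q ^ c1)%N by rewrite ed1 /= mul1n.
  have ed2' : d2 = (2 ^ false * p ^ b2 * q ^ c2)%N by rewrite ed2 /= mul1n.
  rewrite /e2 /zsqrt; apply: (@exist_gen2 _ _ _ _ _ _ _ _ _ _ _ _ b1 c1 b2 c2 ed1' ed2' eu1 eu2 enn); first by rewrite ev eV aux2.
  by case: ew => ->; [left | right].
- move=> eta _ heta.
  have [hE hC] := @tupE1 _ _ _ _ hN1.
  rewrite /e1 hE in heta *.
  have [P1 P2 P3] := @pos1 _ _ x1 (prime_gt0 pp).
  split => -[m hm].
  + apply: (@case1 _ _ _ _ _ _ _ _ h1s2 h1sp h1sq h2s2 h2sp h2sq h3s2 h3sp h3sq (prime_gt0 pp) (prime_gt0 pq) (@sq_pos _ _ P1 hm) hC _ _ heta).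
    by rewrite -castB1 (@castsq _ _ hm).
  + apply: (@case2 _ _ _ _ _ _ _ _ h1s2 h1sp h1sq h2s2 h2sp h2sq h3s2 h3sp h3sq (prime_gt0 pp) (prime_gt0 pq) (@sq_pos _ _ P2 hm) hC _ _ heta).
    by rewrite -castB2 (@castsq _ _ hm).
  + apply: (@case3 _ _ _ _ _ _ _ _ h1s2 h1sp h1sq h2s2 h2sp h2sq h3s2 h3sp h3sq (prime_gt0 pp) (prime_gt0 pq) (@sq_pos _ _ P3 hm) hC _ _ heta).
    by rewrite -castB3 (@castsq _ _ hm).
move=> eta _ heta.
have [hE hC] := @tupE2 _ _ _ _ hN2.
rewrite /e2 hE in heta *.
have [P1 P2 P3] := @pos1 _ _ v1 (prime_gt0 pp).
split => -[m hm].
+ apply: (@case4 _ _ _ _ _ _ _ _ h1s2 h1sp h1sq h2s2 h2sp h2sq h3s2 h3sp h3sq (prime_gt0 pp) (prime_gt0 pq) (@sq_pos _ _ P1 hm) hC _ _ heta).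
  by rewrite -castB1 (@castsq _ _ hm).
+ apply: (@case5 _ _ _ _ _ _ _ _ h1s2 h1sp h1sq h2s2 h2sp h2sq h3s2 h3sp h3sq (prime_gt0 pp) (prime_gt0 pq) (@sq_pos _ _ P2 hm) hC _ _ heta).
  by rewrite -castB2 (@castsq _ _ hm).
+ apply: (@case6 _ _ _ _ _ _ _ _ h1s2 h1sp h1sq h2s2 h2sp h2sq h3s2 h3sp h3sq (prime_gt0 pp) (prime_gt0 pq) (@sq_pos _ _ P3 hm) hC _ _ heta).
  by rewrite -castB3 (@castsq _ _ hm).
Qed.
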